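(* Let $G\sim G(p,c/p)$ with $c=\Omega(p^{3/4+\epsilon'})$ for some $\epsilon'>0$. Partition the vertex set into three parts $A,B,C$ each of size $p/3$, let $\gamma=c^2/(6p)$, and let $m_{A,C}$ be the number of pairs $(a,c_0)\in A\times C$ such that at least $\gamma$ nodes of $B$ are adjacent to both $a$ and $c_0$. Then $$\Pr\Big(m_{A,C}\le\tfrac12(p/3)^2\Big)\le\frac{p}{3}\exp\!\Big(-\frac{p}{36}\Big).$$
   Context: $G(p,c/p)$ is the Erdős–Rényi random graph on $p$ vertices with independent edge probability $c/p$. *)

(* Defs.v *)
From HB Require Import structures.
From mathcomp Require Import all_boot all_order all_algebra.
From mathcomp Require Import reals.
From mathcomp Require Import sequences exp.
Set Implicit Arguments. Unset Strict Implicit. Unset Printing Implicit Defensive.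
Import Order.TTheory GRing.Theory Num.Theory.
Local Open Scope ring_scope.

(* A simple graph on vertex set 'I_p is given by its edge set E, a set of
   2-element subsets of 'I_p. *)
Definition pairs2 (p : nat) : {set {set 'I_p}} := [set e : {set 'I_p} | #|e| == 2%N].

Definition adj (p : nat) (E : {set {set 'I_p}}) (u v : 'I_p) : bool :=
  (u != v) && ([set u; v] \in E).

(* Probability mass of the edge set E in the Erdos-Renyi model G(p,q):
   each of the 2-element subsets is an edge independently with prob. q. *)
Definition gnp_mass (R : realType) (p : nat) (q : R) (E : {set {set 'I_p}}) : R :=
  if E \subset pairs2 p then
    \prod_(e in pairs2 p) (if e \in E then q else 1 - q)
  else 0.

Definition gnp_prob (R : realType) (p : nat) (q : R)
  (P : pred {set {set 'I_p}}) : R :=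
  \sum_(E | P E) gnp_mass q E.

Definition codeg_in (p : nat) (E : {set {set 'I_p}}) (B : {set 'I_p}) (a c0 : 'I_p) : nat :=
  #|[set b in B | adj E a b && adj E c0 b]|.

Definition m_AC (R : realType) (p : nat) (E : {set {set 'I_p}})
  (A B C : {set 'I_p}) (gamma : R) : nat :=
  #|[set x : 'I_p * 'I_p | [&& x.1 \in A, x.2 \in C &
                              gamma <= (codeg_in E B x.1 x.2)%:R]]|.

(* Main.v *)
Require Import Defs.
From HB Require Import structures.
From mathcomp Require Import all_boot all_order all_algebra.
From mathcomp Require Import reals.
From mathcomp Require Import sequences exp.
Set Implicit Arguments. Unset Strict Implicit. Unset Printing Implicit Defensive.
Import Order.TTheory GRing.Theory Num.Theory.
Local Open Scope ring_scope.

Section Gen.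
Variables (R : realType) (T : finType) (q : R).

Lemma mk_disj (A B : {set T}) : (forall x, x \in A -> x \notin B) -> [disjoint A & B].
Proof. by move=> h; rewrite disjoint_subset; apply/subsetP => x xA; rewrite inE h. Qed.

Definition wt (J E : {set T}) : R := \prod_(e in J) (if e \in E then q else 1 - q).
Definition Ex (J : {set T}) (f : {set T} -> R) : R :=
  \sum_(E : {set T} | E \subset J) wt J E * f E.

Lemma sum_split (J1 J2 : {set T}) (g : {set T} -> R) : [disjoint J1 & J2] ->
  \sum_(E : {set T} | E \subset J1 :|: J2) g E =
  \sum_(E1 : {set T} | E1 \subset J1) \sum_(E2 : {set T} | E2 \subset J2) g (E1 :|: E2).
Proof.
move=> dJ.
rewrite (pair_big_dep (fun E1 : {set T} => E1 \subset J1) (fun _ (E2 : {set T}) => E2 \subset J2) (fun E1 E2 => g (E1 :|: E2))) /=.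
rewrite (reindex_onto (fun x : {set T} * {set T} => x.1 :|: x.2)
   (fun E => (E :&: J1, E :&: J2))) /=; last first.
  by move=> E sE; rewrite -setIUr; apply/setIidPl.
apply: eq_bigl => [[E1 E2]] /=.
apply/idP/idP.
- case/andP=> _ /eqP [e1 e2]; rewrite -e1 -e2 !subsetIr //.
- case/andP=> s1 s2; rewrite (setUSS s1 s2) /=.
  apply/eqP; congr pair; rewrite setIUl.
  + rewrite (setIidPl s1).
    have -> : E2 :&: J1 = set0.
      apply/eqP; rewrite -subset0; apply/subsetP => x; rewrite inE => /andP[x2 x1].
      have := (subsetP s2 _ x2) => xJ2.
      by move: dJ => /disjointFr/(_ x1); rewrite xJ2.
    by rewrite setU0.
  + rewrite (setIidPl s2).
    have -> : E1 :&: J2 = set0.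
      apply/eqP; rewrite -subset0; apply/subsetP => x; rewrite inE => /andP[x1 x2].
      have := (subsetP s1 _ x1) => xJ1.
      by move: dJ => /disjointFr/(_ xJ1); rewrite x2.
    by rewrite set0U.
Qed.

Lemma wt_split (J1 J2 E1 E2 : {set T}) : [disjoint J1 & J2] ->
  E1 \subset J1 -> E2 \subset J2 ->
  wt (J1 :|: J2) (E1 :|: E2) = wt J1 E1 * wt J2 E2.
Proof.
move=> dJ s1 s2; rewrite /wt.
rewrite (eq_bigl [predU J1 & J2]) ?bigU //=; last by move=> x; rewrite !inE.
congr (_ * _); apply: eq_bigr => e eJ; rewrite inE.
- have -> : (e \in E2) = false.
    apply/negbTE/negP => /(subsetP s2) eJ2.
    by move: dJ => /disjointFr/(_ eJ); rewrite eJ2.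
  by rewrite orbF.
- have -> : (e \in E1) = false.
    apply/negbTE/negP => /(subsetP s1) eJ1.
    by move: dJ => /disjointFr/(_ eJ1); rewrite eJ.
  by [].
Qed.

Lemma Ex_split (J1 J2 : {set T}) f : [disjoint J1 & J2] ->
  Ex (J1 :|: J2) f = Ex J1 (fun E1 => Ex J2 (fun E2 => f (E1 :|: E2))).
Proof.
move=> dJ; rewrite /Ex sum_split //; apply: eq_bigr => E1 s1.
rewrite big_distrr /=; apply: eq_bigr => E2 s2.
by rewrite wt_split // mulrA.
Qed.

Lemma Ex0 (f : {set T} -> R) : Ex set0 f = f set0.
Proof.
rewrite /Ex (bigD1 set0) ?sub0set //= big1 ?addr0.
  by rewrite /wt big_set0 mul1r.
by move=> E /andP[]; rewrite subset0 => ->.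
Qed.

Lemma Ex1 e (f : {set T} -> R) : Ex [set e] f = q * f [set e] + (1 - q) * f set0.
Proof.
rewrite /Ex (eq_bigl (fun E => E \in powerset [set e])); last by move=> E; rewrite inE.
rewrite powerset1 big_setU1 /=; last first.
  rewrite inE; apply/eqP => /setP/(_ e); rewrite !inE eqxx //.
rewrite big_set1 /wt !big_set1 !inE eqxx addrC; congr (_ + _).
Qed.

Lemma Ex_eq (J : {set T}) (f g : {set T} -> R) : (forall E : {set T}, E \subset J -> f E = g E) -> Ex J f = Ex J g.
Proof. by move=> h; apply: eq_bigr => E sE; rewrite h. Qed.

Lemma Ex_scale (J : {set T}) c (f : {set T} -> R) : Ex J (fun E => c * f E) = c * Ex J f.
Proof. by rewrite /Ex big_distrr; apply: eq_bigr => E _; rewrite mulrCA. Qed.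

Lemma Ex_scaler (J : {set T}) c (f : {set T} -> R) : Ex J (fun E => f E * c) = Ex J f * c.
Proof. by rewrite mulrC -Ex_scale; apply: Ex_eq => E _; rewrite mulrC. Qed.

Lemma Ex_add (J : {set T}) (f g : {set T} -> R) : Ex J (fun E => f E + g E) = Ex J f + Ex J g.
Proof. by rewrite /Ex -big_split; apply: eq_bigr => E _; rewrite mulrDr. Qed.

Lemma Ex_sum (I : finType) (P : pred I) (J : {set T}) (f : I -> {set T} -> R) :
  Ex J (fun E => \sum_(i | P i) f i E) = \sum_(i | P i) Ex J (f i).
Proof.
rewrite /Ex exchange_big /=; apply: eq_bigr => E _; rewrite big_distrr //.
Qed.

Hypothesis q0 : 0 <= q.
Hypothesis q1 : q <= 1.

Lemma wt_ge0 (J E : {set T}) : 0 <= wt J E.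
Proof.
by apply: prodr_ge0 => e _; case: ifP => _ //; rewrite subr_ge0.
Qed.

Lemma Ex_le (J : {set T}) (f g : {set T} -> R) : (forall E : {set T}, E \subset J -> f E <= g E) -> Ex J f <= Ex J g.
Proof.
move=> h; apply: ler_sum => E sE; apply: ler_wpM2l; [exact: wt_ge0| exact: h].
Qed.


Lemma Ex_one (J : {set T}) : Ex J (fun _ => 1) = 1.
Proof.
move: {2}#|J| (erefl #|J|) => n; elim: n J => [|n IH] J cJ.
  by move/eqP: cJ; rewrite cards_eq0 => /eqP ->; rewrite Ex0.
have [e eJ] : exists e, e \in J.
  by apply/set0Pn; rewrite -card_gt0 cJ.
rewrite -(setD1K eJ) Ex_split; last first.
  by apply: mk_disj => x; rewrite !inE => /eqP ->; rewrite eqxx.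
rewrite Ex1 !IH ?mulr1 ?subrKC //.
by move: cJ; rewrite (cardsD1 e J) eJ add1n => -[].
Qed.

Lemma Ex_const (J : {set T}) c : Ex J (fun _ => c) = c.
Proof.
by rewrite (Ex_eq (g := fun _ => c * 1)) ?Ex_scale ?Ex_one ?mulr1 // => E _; rewrite mulr1.
Qed.

Lemma Ex_loc (J K : {set T}) (f : {set T} -> R) : J \subset K ->
  (forall E : {set T}, E \subset K -> f E = f (E :&: J)) -> Ex K f = Ex J f.
Proof.
move=> sJK hf.
have dJ : [disjoint J & K :\: J].
  by apply: mk_disj => x xJ; rewrite inE xJ.
rewrite -(setID K J) (setIidPr sJK) Ex_split //.
apply: Ex_eq => E1 s1.
rewrite (Ex_eq (g := fun _ => f E1)) ?Ex_const // => E2 s2.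
rewrite hf; last by rewrite -(setID K J) (setIidPr sJK) setUSS.
rewrite setIUl (setIidPl s1).
have -> : E2 :&: J = set0.
  apply/eqP; rewrite -subset0; apply/subsetP => x; rewrite inE => /andP[x2 x1].
  by move: (subsetP s2 _ x2); rewrite inE x1.
by rewrite setU0.
Qed.

Lemma Ex_prod (I : finType) (S : {set I}) (J : I -> {set T}) (f : I -> {set T} -> R) :
  (forall i j, i \in S -> j \in S -> i != j -> [disjoint J i & J j]) ->
  (forall i (E : {set T}), i \in S -> f i E = f i (E :&: J i)) ->
  Ex (\bigcup_(i in S) J i) (fun E => \prod_(i in S) f i E) = \prod_(i in S) Ex (J i) (f i).
Proof.
move: {2}#|S| (erefl #|S|) => n; elim: n S => [|n IH] S cS dJ hf.
  move/eqP: cS; rewrite cards_eq0 => /eqP ->.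
  by rewrite big_set0 Ex0 !big_set0.
have [i iS] : exists i, i \in S by apply/set0Pn; rewrite -card_gt0 cS.
have cS' : #|S :\ i| = n by move: cS; rewrite (cardsD1 i S) iS add1n => -[].
have dS' : forall j j', j \in S :\ i -> j' \in S :\ i -> j != j' -> [disjoint J j & J j'].
  by move=> j j'; rewrite !inE => /andP[_ ?] /andP[_ ?]; apply: dJ.
have hf' : forall j (E : {set T}), j \in S :\ i -> f j E = f j (E :&: J j).
  by move=> j E; rewrite inE => /andP[_ ?]; apply: hf.
rewrite (big_setD1 i iS) /= (big_setD1 i iS) /=.
have dU : [disjoint J i & \bigcup_(j in S :\ i) J j].
  apply/bigcup_disjoint => j; rewrite !inE => /andP[ji jS].
  by apply: dJ; rewrite // eq_sym.
rewrite Ex_split //.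
rewrite -(IH _ cS' dS' hf') -Ex_scaler.
apply: Ex_eq => E1 s1.
rewrite -Ex_scale; apply: Ex_eq => E2 s2.
rewrite (big_setD1 i iS) /=; congr (_ * _).
- rewrite hf // setIUl (setIidPl s1).
  have -> : E2 :&: J i = set0.
    apply/eqP; rewrite -subset0; apply/subsetP => x; rewrite inE => /andP[x2 x1].
    have := subsetP s2 _ x2 => xU.
    by move: dU => /disjointFr/(_ x1); rewrite xU.
  by rewrite setU0.
- apply: eq_bigr => j jS; rewrite hf' // setIUl.
  have -> : E1 :&: J j = set0.
    apply/eqP; rewrite -subset0; apply/subsetP => x; rewrite inE => /andP[x1 x2].
    have := subsetP s1 _ x1 => xi.
    have xU : x \in \bigcup_(j in S :\ i) J j by apply/bigcupP; exists j.
    by move: dU => /disjointFr/(_ xi); rewrite xU.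
  by rewrite set0U -hf'.
Qed.


Lemma Ex_bern (I : finType) (S : {set I}) (e : I -> T) (x : I -> R) :
  {in S &, injective e} ->
  Ex (\bigcup_(i in S) [set e i]) (fun E => \prod_(i in S) (if e i \in E then x i else 1))
  = \prod_(i in S) (q * x i + (1 - q)).
Proof.
move=> inj.
rewrite (Ex_prod (J := fun i => [set e i]) (f := fun i E => if e i \in E then x i else 1)).
- apply: eq_bigr => i iS; rewrite Ex1 !inE eqxx mulr1.
  by [].
- move=> i j iS jS ij; apply: mk_disj => y; rewrite !inE => /eqP ->.
  by apply/negP => /eqP /(inj _ _ iS jS) /eqP; rewrite (negbTE ij).
- by move=> i E iS; rewrite !inE eqxx andbT.
Qed.

Lemma Ex_ge0 (J : {set T}) (f : {set T} -> R) : (forall E : {set T}, E \subset J -> 0 <= f E) -> 0 <= Ex J f.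
Proof. by move=> h; rewrite -(Ex_const J 0); apply: Ex_le. Qed.

End Gen.

Lemma prod_if (R : realType) (I : finType) (S : {set I}) (P : pred I) (s : R) :
  \prod_(i in S) (if P i then s else 1) = s ^+ #|[set i in S | P i]|.
Proof.
rewrite -big_mkcondr /= -prodr_const; apply: eq_bigl => i; rewrite !inE //.
Qed.

Section Num.
Variable R : realType.

Lemma pow_le_exp (a : R) n : 0 <= a <= 1 -> (1 - a) ^+ n <= expR (- (a * n%:R)).
Proof.
case/andP=> a0 a1.
rewrite -mulNr mulrC expRM_natl; apply: lerXn2r; rewrite ?inE ?subr_ge0 ?expR_ge0 //.
- by rewrite nnegrE subr_ge0.
- by rewrite nnegrE expR_ge0.
- exact: expR_ge1Dx.
Qed.

Lemma pow_le_exp2 (b : R) n : 0 <= b -> (1 + b) ^+ n <= expR (b * n%:R).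
Proof.
move=> b0; rewrite mulrC expRM_natl; apply: lerXn2r.
- by rewrite nnegrE addr_ge0.
- by rewrite nnegrE expR_ge0.
- exact: expR_ge1Dx.
Qed.

Lemma expR_up (x : R) : expR x * (1 - x) <= 1.
Proof.
have h : 1 - x <= expR (- x) by have := expR_ge1Dx (- x).
by rewrite -[X in _ <= X](expRxMexpNx_1 x); apply: ler_wpM2l; rewrite ?expR_ge0.
Qed.

End Num.
From mathcomp Require Import ring lra zify.

Definition ind (R : realType) (b : bool) : R := if b then 1 else 0.

Lemma n910 (R : realType) : 0 < (9/10 : R) <= 1.
Proof. apply/andP; split; lra. Qed.
Lemma n109 (R : realType) : 0 < (10/9 : R).
Proof. lra. Qed.
Lemma nb1 (R : realType) (q : R) : 0 <= q <= 1 -> 0 <= 1 - q / 10.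
Proof. case/andP => ? ?; lra. Qed.
Lemma nb0 (R : realType) (q x : R) : 0 <= q <= 1 -> 0 <= x -> 0 <= q * x + (1 - q).
Proof. case/andP => ? ? ?; nra. Qed.
Lemma nb2 (R : realType) (q : R) : q * (9 / 10) + (1 - q) <= 1 - q / 10.
Proof. lra. Qed.

Lemma n34 (R : realType) : 0 < (3/4 : R) <= 1.
Proof. apply/andP; split; lra. Qed.
Lemma nb3 (R : realType) (q : R) : q * (3 / 4) + (1 - q) = 1 - q / 4.
Proof. lra. Qed.
Lemma nb4 (R : realType) (q : R) : 0 <= q <= 1 -> 0 <= q / 4 <= 1.
Proof. case/andP => ? ?; apply/andP; split; lra. Qed.
Lemma nb5 (R : realType) (q x y : R) : 0 <= q -> x <= y -> - (q / 4 * y) <= - (q / 4 * x).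
Proof. move=> ? ?; nra. Qed.

Lemma n16 (R : realType) : (16 : R) = 2 ^+ 4.
Proof. by rewrite -natrX. Qed.
Lemma nb6 (R : realType) (r x : R) : x <= r -> 1 + 15 * x <= 1 + 15 * r.
Proof. move=> ?; lra. Qed.
Lemma nb7 (R : realType) (x : R) : 0 <= x -> 0 <= 1 + 15 * x.
Proof. move=> ?; lra. Qed.
Lemma ind_ge0 (R : realType) b : 0 <= ind R b.
Proof. by rewrite /ind; case: b. Qed.
Lemma if16 (R : realType) b : (if b then 16 else 1 : R) = 1 + 15 * ind R b.
Proof. rewrite /ind; case: b; lra. Qed.

Lemma card_sep (T : finType) (S : {set T}) (P : pred T) :
  #|[set x in S | P x]| + #|[set x in S | ~~ P x]| = #|S|.
Proof.
rewrite -[#|S|]sum1_card (bigID P) /=; congr (_ + _); rewrite -sum1_card;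
  by apply: eq_bigl => x; rewrite inE.
Qed.

Lemma m_sum (R : realType) p (E : {set {set 'I_p}}) (A B C : {set 'I_p}) (gam : R) :
  m_AC E A B C gam = (\sum_(a in A) #|[set c0 in C | (gam <= (codeg_in E B a c0)%:R)%R]|)%N.
Proof.
rewrite /m_AC -sum1_card.
rewrite (eq_bigl (fun x => (x.1 \in A) && ((x.2 \in C) && (gam <= (codeg_in E B x.1 x.2)%:R)))); last first.
  by move=> x; rewrite inE.
rewrite -(pair_big_dep (fun a => a \in A) (fun a c0 => (c0 \in C) && (gam <= (codeg_in E B a c0)%:R)) (fun _ _ => 1%N)) /=.
by apply: eq_bigr => a _; rewrite -sum1_card; apply: eq_bigl => c; rewrite inE.
Qed.

Lemma gnp_Ex (R : realType) p (q : R) (P : pred {set {set 'I_p}}) :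
  gnp_prob q P = Ex q (pairs2 p) (fun E => ind R (P E)).
Proof.
rewrite /gnp_prob /Ex big_mkcond [RHS]big_mkcond /=; apply: eq_bigr => E _.
rewrite /gnp_mass /wt /ind; case: (P E); case: ifP => _; rewrite ?mulr1 ?mulr0 //.
Qed.

Section Graph.
Variables (R : realType) (p : nat) (A B C : {set 'I_p}).
Hypotheses (dAB : [disjoint A & B]) (dAC : [disjoint A & C]) (dBC : [disjoint B & C]).

Definition pr (u v : 'I_p) : {set 'I_p} := [set u; v].

Lemma pr_eq u v x y : pr u v = pr x y -> u = x \/ u = y.
Proof.
move=> h; have : u \in pr x y by rewrite -h /pr !inE eqxx.
by rewrite /pr !inE => /orP[] /eqP; [left|right].
Qed.

Lemma pr_sym u v : pr u v = pr v u.
Proof. by rewrite /pr setUC. Qed.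

Lemma pr_inj a : a \notin B -> {in B &, injective (pr a)}.
Proof.
move=> aB b b' bB b'B h.
have := pr_eq (etrans (pr_sym b a) (etrans h (pr_sym a b'))).
case=> // ba; by move: aB; rewrite -ba bB.
Qed.

Lemma adj_pr (E : {set {set 'I_p}}) a b : a != b -> adj E a b = (pr a b \in E).
Proof. by rewrite /adj => ->. Qed.

Lemma adj_loc (E K : {set {set 'I_p}}) u v : pr u v \in K -> adj (E :&: K) u v = adj E u v.
Proof. by rewrite /adj /pr inE => ->; rewrite andbT. Qed.

Lemma pr_pairs2 u v : u != v -> pr u v \in pairs2 p.
Proof. by move=> uv; rewrite /pairs2 inE /pr cards2 uv. Qed.

Definition Ja (a : 'I_p) : {set {set 'I_p}} := \bigcup_(b in B) [set pr a b].
Definition Jc (c0 : 'I_p) : {set {set 'I_p}} := \bigcup_(b in B) [set pr c0 b].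
Definition JC : {set {set 'I_p}} := \bigcup_(c0 in C) Jc c0.

Lemma pr_Ja a b : b \in B -> pr a b \in Ja a.
Proof. by move=> bB; apply/bigcupP; exists b; rewrite ?inE. Qed.

Lemma JaP a e : e \in Ja a -> exists2 b, b \in B & e = pr a b.
Proof. by case/bigcupP => b bB; rewrite inE => /eqP ->; exists b. Qed.

Lemma JCP e : e \in JC -> exists c0 b, [/\ c0 \in C, b \in B & e = pr c0 b].
Proof.
by case/bigcupP => c0 c0C /bigcupP [b bB]; rewrite inE => /eqP ->; exists c0, b.
Qed.

Lemma notBA a : a \in A -> a \notin B.
Proof. by move=> aA; rewrite (disjointFr dAB aA). Qed.
Lemma notCA a : a \in A -> a \notin C.
Proof. by move=> aA; rewrite (disjointFr dAC aA). Qed.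
Lemma notCB b : b \in B -> b \notin C.
Proof. by move=> bB; rewrite (disjointFr dBC bB). Qed.
Lemma notAB b : b \in B -> b \notin A.
Proof. by move=> bB; apply/negP => /notBA; rewrite bB. Qed.
Lemma notBC c : c \in C -> c \notin B.
Proof. by move=> cC; apply/negP => /notCB; rewrite cC. Qed.
Lemma notAC c : c \in C -> c \notin A.
Proof. by move=> cC; apply/negP => /notCA; rewrite cC. Qed.

Lemma neq_of (P1 : {set 'I_p}) u v : u \in P1 -> v \notin P1 -> u != v.
Proof. by move=> h1 h2; apply/eqP => e; move: h2; rewrite -e h1. Qed.

Lemma Ja_pairs2 a : a \notin B -> Ja a \subset pairs2 p.
Proof.
move=> aB; apply/subsetP => e /JaP [b bB ->]; apply: pr_pairs2.
by apply/eqP => ab; move: aB; rewrite ab bB.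
Qed.

Lemma JC_pairs2 : JC \subset pairs2 p.
Proof.
apply/subsetP => e /JCP [c0 [b [cC bB ->]]]; apply: pr_pairs2.
by apply/eqP => ab; move: (notBC cC); rewrite ab bB.
Qed.

Lemma prA_notJC a b : a \in A -> pr a b \notin JC.
Proof.
move=> aA; apply/negP => /JCP [c0 [b' [cC bB]]] /pr_eq [] e.
- by move: (notCA aA); rewrite e cC.
- by move: (notBA aA); rewrite e bB.
Qed.

Lemma prC_notJa a c0 b : a \in A -> c0 \in C -> pr c0 b \notin Ja a.
Proof.
move=> aA cC; apply/negP => /JaP [b' bB] /pr_eq [] e.
- by move: (notCA aA); rewrite -e cC.
- by move: (notBC cC); rewrite e bB.
Qed.

Lemma Jc_disj c0 c1 : c0 \in C -> c1 \in C -> c0 != c1 -> [disjoint Jc c0 & Jc c1].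
Proof.
move=> c0C c1C ne; apply: mk_disj => e /bigcupP [b bB]; rewrite inE => /eqP ->.
apply/negP => /bigcupP [b' bB']; rewrite inE => /eqP /pr_eq [] e'.
- by move: ne; rewrite e' eqxx.
- by move: (notBC c0C); rewrite e' bB'.
Qed.

Lemma Ja_disj a a' : a \in A -> a' \in A -> a != a' -> [disjoint Ja a & Ja a'].
Proof.
move=> aA a'A ne; apply: mk_disj => e /JaP [b bB ->].
apply/negP => /JaP [b' bB'] /pr_eq [] e'.
- by move: ne; rewrite e' eqxx.
- by move: (notBA aA); rewrite e' bB'.
Qed.

Lemma Ja_JC_disj a : a \in A -> [disjoint Ja a & JC].
Proof. by move=> aA; apply: mk_disj => e /JaP [b bB ->]; apply: prA_notJC. Qed.


Definition deg (E : {set {set 'I_p}}) a := #|[set b in B | adj E a b]|.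

Lemma deg_pr E a : a \notin B -> deg E a = #|[set b in B | pr a b \in E]|.
Proof.
move=> aB; apply: eq_card => b; rewrite !inE; case bB: (b \in B) => //=.
by rewrite adj_pr // eq_sym (neq_of bB aB).
Qed.

Variables (q : R) (thr gam : R).
Hypotheses (q0 : 0 <= q) (q1 : q <= 1).

Lemma ind_pow (X N : nat) (s : R) (t : R) : 0 < s <= 1 -> (X%:R < t) -> t <= N%:R ->
  s ^+ X * s^-1 ^+ N >= 1.
Proof.
case/andP=> s0 s1 Xt tN.
have XN : (X <= N)%N by rewrite -(ler_nat R); apply/ltW/(lt_le_trans Xt tN).
have h := ler_wiXn2l (ltW s0) s1 XN.
have -> : 1 = s ^+ N * s^-1 ^+ N by rewrite -exprMn mulfV ?expr1n // gt_eqF.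
by apply: ler_wpM2r => //; rewrite exprn_ge0 // invr_ge0 ltW.
Qed.

Lemma low_bound a : a \notin B -> 0 <= thr ->
  Ex q (Ja a) (fun E => ind R ((deg E a)%:R < thr))
  <= (1 - q / 10) ^+ #|B| * (10 / 9) ^+ (Num.truncn thr).+1.
Proof.
move=> aB thr0.
apply: le_trans (@Ex_le _ _ q q0 q1 _ _ (fun E => (9/10) ^+ deg E a * (10/9) ^+ (Num.truncn thr).+1) _) _.
  move=> E _; rewrite /ind; case: ifP => h.
    have -> : (10 / 9 : R) = (9 / 10)^-1 by rewrite invf_div.
    apply: ind_pow h _; first exact: n910.
    exact/ltW/truncnS_gt.
  by rewrite mulr_ge0 // exprn_ge0 // divr_ge0 // ler0n.
rewrite Ex_scaler; apply: ler_wpM2r; first by rewrite exprn_ge0 // divr_ge0 // ler0n.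
rewrite (@Ex_eq _ _ q _ _ (fun E => \prod_(b in B) (if pr a b \in E then 9/10 else 1))); last first.
  by move=> E _; rewrite prod_if deg_pr.
rewrite Ex_bern //; last exact: pr_inj.
rewrite prodr_const cardE -cardE; apply: lerXn2r.
- rewrite nnegrE; apply: (@nb0 R q (9/10)); first by apply/andP; split.
  by case/andP: (n910 R) => /ltW.
- by rewrite nnegrE; apply: nb1; apply/andP; split.
- apply: nb2.
Qed.

Definition cd a (E1 : {set {set 'I_p}}) c0 (E : {set {set 'I_p}}) :=
  #|[set b in B | (pr a b \in E1) && (pr c0 b \in E)]|.

Lemma deg_split a (E1 E2 : {set {set 'I_p}}) : a \in A -> E2 \subset JC ->
  deg (E1 :|: E2) a = deg E1 a.
Proof.
move=> aA s2; rewrite !deg_pr ?notBA //; apply: eq_card => b; rewrite !inE.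
case: (b \in B) => //=.
have -> : (pr a b \in E2) = false.
  by apply/negbTE/negP => /(subsetP s2); apply/negP/prA_notJC.
by rewrite orbF.
Qed.

Lemma codeg_split a c0 (E1 E2 : {set {set 'I_p}}) : a \in A -> c0 \in C ->
  E1 \subset Ja a -> E2 \subset JC ->
  codeg_in (E1 :|: E2) B a c0 = cd a E1 c0 (E2 :&: Jc c0).
Proof.
move=> aA cC s1 s2; apply: eq_card => b; rewrite !inE.
case bB: (b \in B) => //=.
rewrite !adj_pr; last 2 first.
- by rewrite eq_sym (neq_of bB (notBC cC)).
- by rewrite eq_sym (neq_of bB (notBA aA)).
rewrite !inE.
have -> : (pr a b \in E2) = false.
  by apply/negbTE/negP => /(subsetP s2); apply/negP/prA_notJC.
have -> : (pr c0 b \in E1) = false.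
  by apply/negbTE/negP => /(subsetP s1); apply/negP/prC_notJa.
have -> : (pr c0 b \in Jc c0) by apply/bigcupP; exists b; rewrite ?inE.
by rewrite orbF /= andbT.
Qed.

Lemma bad_bound a c0 (E1 : {set {set 'I_p}}) : a \in A -> c0 \in C ->
  thr <= (deg E1 a)%:R -> 0 <= gam ->
  Ex q (Jc c0) (fun E => ind R ((cd a E1 c0 E)%:R < gam))
  <= expR (- (q / 4 * thr)) * (4 / 3) ^+ (Num.truncn gam).+1.
Proof.
move=> aA cC hdeg gam0.
apply: le_trans (@Ex_le _ _ q q0 q1 _ _ (fun E => (3/4) ^+ cd a E1 c0 E * (4/3) ^+ (Num.truncn gam).+1) _) _.
  move=> E _; rewrite /ind; case: ifP => h.
    have -> : (4 / 3 : R) = (3 / 4)^-1 by rewrite invf_div.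
    apply: ind_pow h _; first exact: n34.
    exact/ltW/truncnS_gt.
  by rewrite mulr_ge0 // exprn_ge0 // divr_ge0 // ler0n.
rewrite Ex_scaler; apply: ler_wpM2r; first by rewrite exprn_ge0 // divr_ge0 // ler0n.
rewrite (@Ex_eq _ _ q _ _ (fun E => \prod_(b in B) (if pr c0 b \in E then (if pr a b \in E1 then 3/4 else 1) else 1))); last first.
  move=> E _; rewrite /cd -prod_if; apply: eq_bigr => b _.
  by case: (pr a b \in E1); case: (pr c0 b \in E).
rewrite Ex_bern //; last exact: pr_inj (notBC cC).
rewrite (eq_bigr (fun b => if pr a b \in E1 then 1 - q / 4 else 1)); last first.
  by move=> b _; case: (pr a b \in E1); rewrite ?nb3 // mulr1 subrKC.
rewrite prod_if -deg_pr ?notBA //.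
apply: le_trans (pow_le_exp _ (nb4 _)) _; first by apply/andP; split.
by rewrite ler_expR; apply: nb5.
Qed.

Lemma deg_loc a (E K : {set {set 'I_p}}) : a \notin B -> Ja a \subset K ->
  deg (E :&: K) a = deg E a.
Proof.
move=> aB sK; rewrite !deg_pr //; apply: eq_card => b; rewrite !inE.
case bB: (b \in B) => //=.
by rewrite (subsetP sK _ (pr_Ja a bB)) andbT.
Qed.

Lemma ind16 (L n : nat) : (n <= 4 * L)%N -> 1 <= (16 : R) ^+ L / 2 ^+ n.
Proof.
move=> h; rewrite ler_pdivlMr ?exprn_gt0 // mul1r n16 -exprM mulnC.
by rewrite ler_eXn2l ?ltr1n // mulnC.
Qed.

Lemma term1 (r : R) : 0 <= r -> 0 <= thr ->
  (forall a, a \in A -> Ex q (Ja a) (fun E => ind R ((deg E a)%:R < thr)) <= r) ->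
  Ex q (pairs2 p) (fun E => ind R (#|A| <= 4 * #|[set a in A | ((deg E a)%:R < thr)%R]|)%N)
  <= (1 + 15 * r) ^+ #|A| / 2 ^+ #|A|.
Proof.
move=> r0 thr0 hr.
apply: le_trans (@Ex_le _ _ q q0 q1 _ _ (fun E => (\prod_(a in A) (if (deg E a)%:R < thr then 16 else 1)) / 2 ^+ #|A|) _) _.
  move=> E _; rewrite prod_if.
  have [h|h] := boolP (#|A| <= 4 * #|[set a in A | ((deg E a)%:R < thr)%R]|)%N; first exact: ind16.
  by rewrite /ind divr_ge0 // exprn_ge0.
rewrite Ex_scaler; apply: ler_wpM2r; first by rewrite invr_ge0 exprn_ge0.
have sub : \bigcup_(a in A) Ja a \subset pairs2 p.
  by apply/bigcupsP => a aA; apply: Ja_pairs2; apply: notBA.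
rewrite (Ex_loc q sub); last first.
  move=> E _; apply: eq_bigr => a aA; rewrite deg_loc ?notBA //.
  by apply: bigcup_sup.
rewrite Ex_prod; last 2 first.
- by move=> a a'; apply: Ja_disj.
- by move=> a E aA; rewrite deg_loc ?notBA.
rewrite -prodr_const; apply: ler_prod => a aA; apply/andP; split.
  by apply: (Ex_ge0 q0 q1) => E _; case: ifP; lra.
rewrite (@Ex_eq _ _ q _ _ (fun E => 1 + 15 * ind R ((deg E a)%:R < thr))); last by move=> E _; rewrite if16.
rewrite Ex_add Ex_const Ex_scale; apply: nb6; exact: hr.
Qed.

Lemma codeg_loc a c0 (E K : {set {set 'I_p}}) : Ja a \subset K -> Jc c0 \subset K ->
  codeg_in (E :&: K) B a c0 = codeg_in E B a c0.
Proof.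
move=> sa sc; apply: eq_card => b; rewrite !inE.
case bB: (b \in B) => //=.
rewrite !adj_loc //; first by apply: (subsetP sc); apply/bigcupP; exists b; rewrite ?inE.
exact: (subsetP sa _ (pr_Ja a bB)).
Qed.

Lemma term2 a (r : R) : a \in A -> 0 <= r ->
  (forall (E1 : {set {set 'I_p}}) c0, E1 \subset Ja a -> c0 \in C -> thr <= (deg E1 a)%:R ->
     Ex q (Jc c0) (fun E => ind R ((cd a E1 c0 E)%:R < gam)) <= r) ->
  Ex q (pairs2 p) (fun E => ind R (~~ ((deg E a)%:R < thr)%R &&
       (#|A| <= 4 * #|[set c0 in C | ((codeg_in E B a c0)%:R < gam)%R]|)%N))
  <= (1 + 15 * r) ^+ #|C| / 2 ^+ #|A|.
Proof.
move=> aA r0 hr.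
apply: le_trans (@Ex_le _ _ q q0 q1 _ _ (fun E => ind R (~~ ((deg E a)%:R < thr)%R) *
   (\prod_(c0 in C) (if (codeg_in E B a c0)%:R < gam then 16 else 1)) / 2 ^+ #|A|) _) _.
  move=> E _; rewrite prod_if.
  rewrite /ind; case: ifP => /andP.
    by case=> -> h; rewrite mul1r; apply: ind16.
  move=> _; rewrite mulr_ge0 // ?invr_ge0 ?exprn_ge0 // mulr_ge0 ?exprn_ge0 //.
  by case: ifP.
rewrite Ex_scaler; apply: ler_wpM2r; first by rewrite invr_ge0 exprn_ge0.
have sub : Ja a :|: JC \subset pairs2 p.
  by rewrite subUset Ja_pairs2 ?notBA // JC_pairs2.
rewrite (Ex_loc q sub); last first.
  move=> E _; rewrite deg_loc ?notBA ?subsetUl //; congr (_ * _).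
  apply: eq_bigr => c0 cC; rewrite codeg_loc // ?subsetUl //.
  by apply: subset_trans (subsetUr _ _); apply: bigcup_sup.
rewrite Ex_split; last exact: Ja_JC_disj.
apply: le_trans (@Ex_le _ _ q q0 q1 _ _ (fun E1 => ind R (~~ ((deg E1 a)%:R < thr)%R) * (1 + 15 * r) ^+ #|C|) _) _; last first.
  rewrite Ex_scaler; apply: ler_piMl; first by rewrite exprn_ge0 // nb7.
  rewrite -(Ex_const q (Ja a) 1); apply: Ex_le => // E _; rewrite /ind; case: ifP => //.
move=> E1 s1.
rewrite (@Ex_eq _ _ q _ _ (fun E2 => ind R (~~ ((deg E1 a)%:R < thr)%R) *
   \prod_(c0 in C) (if (cd a E1 c0 (E2 :&: Jc c0))%:R < gam then 16 else 1))); last first.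
  move=> E2 s2; rewrite deg_split //; congr (_ * _); apply: eq_bigr => c0 cC.
  by rewrite codeg_split.
rewrite Ex_scale.
have [hlow|hlow] := boolP ((deg E1 a)%:R < thr); first by rewrite /ind /= !mul0r.
rewrite /ind /= !mul1r.
rewrite /JC Ex_prod; last 2 first.
- by move=> c c'; apply: Jc_disj.
- by move=> c E _; rewrite -setIA setIid.
rewrite -prodr_const; apply: ler_prod => c0 cC; apply/andP; split.
  by apply: (Ex_ge0 q0 q1) => E _; case: ifP; lra.
rewrite (@Ex_eq _ _ q _ _ (fun E => 1 + 15 * ind R ((cd a E1 c0 E)%:R < gam))); last first.
  by move=> E sE; rewrite (setIidPl sE) if16.
rewrite Ex_add Ex_const Ex_scale; apply: nb6; apply: hr => //.
by rewrite leNgt hlow.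
Qed.

Lemma comb (E : {set {set 'I_p}}) : #|C| = #|A| ->
  ((m_AC E A B C gam)%:R <= (#|A|%:R) ^+ 2 / 2 :> R) ->
  (#|A| <= 4 * #|[set a in A | ((deg E a)%:R < thr)%R]|)%N \/
  exists2 a, a \in A & ~~ ((deg E a)%:R < thr)%R &&
     (#|A| <= 4 * #|[set c0 in C | ((codeg_in E B a c0)%:R < gam)%R]|)%N.
Proof.
move=> cC hm.
set n := #|A|.
have h2m : (2 * m_AC E A B C gam <= n ^ 2)%N.
  by rewrite -(ler_nat R) natrM natrX mulrC -ler_pdivlMr.
case: (leqP n (4 * #|[set a in A | ((deg E a)%:R < thr)%R]|)) => hL; first by left.
right.
case: (pickP (fun a => (a \in A) && (~~ ((deg E a)%:R < thr)%R &&
     (n <= 4 * #|[set c0 in C | ((codeg_in E B a c0)%:R < gam)%R]|)%N))) => [a /andP[aA h]|hnone].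
  by exists a.
exfalso.
set L := #|[set a in A | ((deg E a)%:R < thr)%R]| in hL.
set L' := #|[set a in A | ~~ ((deg E a)%:R < thr)%R]|.
have hLL : (L + L' = n)%N by exact: (card_sep A (fun a => ((deg E a)%:R < thr)%R)).
have hY : forall a, a \in A -> ~~ ((deg E a)%:R < thr)%R ->
    (3 * n + 1 <= 4 * #|[set c0 in C | (gam <= (codeg_in E B a c0)%:R)%R]|)%N.
  move=> a aA hl.
  have := hnone a; rewrite aA hl /= => /negbT; rewrite -ltnNge => hX.
  have := card_sep C (fun c0 => (gam <= (codeg_in E B a c0)%:R)%R).
  rewrite cC -/n.
  have -> : #|[set x in C | ~~ (gam <= (codeg_in E B a x)%:R)%R]| =
            #|[set c0 in C | ((codeg_in E B a c0)%:R < gam)%R]|.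
    by apply: eq_card => x; rewrite !inE ltNge.
  set X := #|[set c0 in C | ((codeg_in E B a c0)%:R < gam)%R]| in hX *.
  set Y := #|[set c0 in C | (gam <= (codeg_in E B a c0)%:R)%R]|.
  move=> e; clearbody X Y; lia.
have hm4 : (L' * (3 * n + 1) <= 4 * m_AC E A B C gam)%N.
  rewrite m_sum big_distrr /= (bigID (fun a => ~~ ((deg E a)%:R < thr)%R)) /=.
  apply: leq_trans (leq_addr _ _).
  rewrite -sum_nat_const.
  rewrite (eq_bigl (fun a => (a \in A) && ~~ ((deg E a)%:R < thr)%R)); last by move=> a; rewrite inE.
  by apply: leq_sum => a /andP[aA hl]; apply: hY.
nia.
Qed.

Lemma main_bound (r1 r2 : R) : #|C| = #|A| -> 0 <= thr -> 0 <= r1 -> 0 <= r2 ->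
  (forall a, a \in A -> Ex q (Ja a) (fun E => ind R ((deg E a)%:R < thr)) <= r1) ->
  (forall a (E1 : {set {set 'I_p}}) c0, a \in A -> E1 \subset Ja a -> c0 \in C ->
     thr <= (deg E1 a)%:R ->
     Ex q (Jc c0) (fun E => ind R ((cd a E1 c0 E)%:R < gam)) <= r2) ->
  gnp_prob q (fun E => (m_AC E A B C gam)%:R <= (#|A|%:R) ^+ 2 / 2 :> R)
  <= (1 + 15 * r1) ^+ #|A| / 2 ^+ #|A| + #|A|%:R * ((1 + 15 * r2) ^+ #|A| / 2 ^+ #|A|).
Proof.
move=> cC thr0 r10 r20 h1 h2.
rewrite gnp_Ex.
apply: le_trans (@Ex_le _ _ q q0 q1 _ _ (fun E =>
   ind R (#|A| <= 4 * #|[set a in A | ((deg E a)%:R < thr)%R]|)%N +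
   \sum_(a in A) ind R (~~ ((deg E a)%:R < thr)%R &&
       (#|A| <= 4 * #|[set c0 in C | ((codeg_in E B a c0)%:R < gam)%R]|)%N)) _) _.
  move=> E _; rewrite {1}/ind; case: ifP => hP; last first.
    by rewrite addr_ge0 ?ind_ge0 // sumr_ge0 // => a _; apply: ind_ge0.
  case: (comb cC hP) => [h|[a aA h]].
    rewrite {1}/ind h; apply: ler_wpDr; last by [].
    by rewrite sumr_ge0 // => a _; apply: ind_ge0.
  apply: ler_wpDl; first exact: ind_ge0.
  by rewrite (bigD1 a aA) /= {1}/ind h ler_wpDr // sumr_ge0 // => ? _; apply: ind_ge0.
rewrite Ex_add Ex_sum; apply: lerD; first exact: term1.
rewrite mulr_natl -sumr_const; apply: ler_sum => a aA.
apply: le_trans (term2 aA r20 _) _; last by rewrite cC.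
by move=> E1 c0 s1 cC0 hd; apply: h2.
Qed.

End Graph.

Section Numerics.
Variable R : realType.

Lemma exp_small (x : R) (M : R) : 0 < M -> M <= 1 - x -> expR x <= M^-1.
Proof.
move=> M0 hM; have h := expR_up x; have e0 := expR_gt0 x.
rewrite -(ler_pM2r M0) mulVf ?gt_eqF //.
by apply: le_trans h; apply: ler_wpM2l => //; apply: ltW.
Qed.

Lemma trunc_bound (t : R) : 0 <= t -> ((Num.truncn t).+1)%:R <= t + 1.
Proof. by move=> t0; rewrite -natr1 lerD2r truncn_le. Qed.

Lemma r1_bound (q mu thr : R) (n : nat) : 0 <= q <= 1 -> mu = n%:R * q ->
  thr = 4/5 * mu -> 6000 <= mu ->
  (1 - q / 10) ^+ n * (10 / 9) ^+ (Num.truncn thr).+1 <= 60^-1.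
Proof.
move=> /andP[q0 q1] hmu hthr hm.
have A1 : (1 - q / 10) ^+ n <= expR (- (q / 10 * n%:R)).
  by apply: pow_le_exp; apply/andP; split; lra.
have A2 : (10 / 9 : R) ^+ (Num.truncn thr).+1 <= expR (1/9 * ((Num.truncn thr).+1)%:R).
  have -> : (10 / 9 : R) = 1 + 1/9 by lra.
  by apply: pow_le_exp2; lra.
have thr0 : 0 <= thr by rewrite hthr; lra.
have A4 := trunc_bound thr0.
apply: le_trans (ler_pM _ _ A1 A2) _.
- by rewrite exprn_ge0 //; lra.
- by rewrite exprn_ge0 //; lra.
rewrite -expRD; apply: exp_small; first lra.
rewrite hmu in hm hthr; nra.
Qed.

Lemma r2_bound (q mu thr gam : R) : 0 <= q <= 1 -> thr = 4/5 * mu ->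
  gam = mu * q / 2 -> 6000 <= mu * q -> 0 <= mu ->
  expR (- (q / 4 * thr)) * (4 / 3) ^+ (Num.truncn gam).+1 <= 60^-1.
Proof.
move=> /andP[q0 q1] hthr hgam hm mu0.
have gam0 : 0 <= gam by rewrite hgam; nra.
have A2 : (4 / 3 : R) ^+ (Num.truncn gam).+1 <= expR (1/3 * ((Num.truncn gam).+1)%:R).
  have -> : (4 / 3 : R) = 1 + 1/3 by lra.
  by apply: pow_le_exp2; lra.
have A4 := trunc_bound gam0.
apply: le_trans (ler_wpM2l (expR_ge0 _) A2) _.
rewrite -expRD; apply: exp_small; first lra.
rewrite hthr; nra.
Qed.

Lemma fin_bound (r : R) (n : nat) : 0 <= r <= 60^-1 ->
  (1 + 15 * r) ^+ n / 2 ^+ n <= expR (- (n%:R / 4)).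
Proof.
move=> /andP[r0 r1].
rewrite -expr_div_n.
have h1 : (1 + 15 * r) / 2 <= 5 / 8 by lra.
have h2 : (5 / 8 : R) <= expR (- (1 / 4)).
  rewrite expRN -[X in _ <= X]div1r ler_pdivlMr ?expR_gt0 //.
  have : expR (1/4) <= (3/4 : R)^-1 by apply: exp_small; lra.
  move=> h; have e0 := expR_gt0 (1/4 : R).
  rewrite invf_div in h.
  nra.
have -> : - (n%:R / 4) = n%:R * (- (1/4)) :> R by lra.
rewrite expRM_natl; apply: lerXn2r.
- by rewrite nnegrE; lra.
- by rewrite nnegrE expR_ge0.
- exact: le_trans h1 h2.
Qed.

Lemma last_bound (n : nat) : (3 <= n)%N ->
  expR (- (n%:R / 4)) + n%:R * expR (- (n%:R / 4)) <= (n%:R : R) * expR (- (n%:R / 12)).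
Proof.
move=> n3; have n3' : (3 : R) <= n%:R by rewrite (ler_nat R 3 n).
have e : expR (- (n%:R / 12)) = expR (- (n%:R / 4)) * expR (n%:R / 6) :> R.
  by rewrite -expRD; congr expR; lra.
rewrite e; have h := expR_ge1Dx (n%:R / 6 : R).
have e0 := expR_gt0 (- (n%:R / 4) : R).
have h2 : 1 + n%:R <= n%:R * expR (n%:R / 6) :> R by nra.
rewrite -[X in X + _]mul1r -mulrDl mulrCA mulrC.
by apply: ler_wpM2l => //; apply: ltW.
Qed.

End Numerics.

Lemma pow34 (R : realType) (x : R) : 0 <= x -> (x `^ (3/4)) ^+ 4 = x ^+ 3.
Proof.
move=> x0; rewrite -powR_mulrn ?powR_ge0 // -powRrM.
have -> : (3 / 4 * 4%:R : R) = 3%:R by lra.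
by rewrite powR_mulrn.
Qed.

Lemma sq_le (R : realType) (x y : R) : 0 <= x -> 0 <= y -> y ^+ 2 <= x ^+ 2 -> y <= x.
Proof. move=> x0 y0 h; nra. Qed.

Theorem lemma7 (R : realType) (eps' K : R) (c : nat -> R) (N : nat) :
  0 < eps' -> 0 < K ->
  (forall p : nat, (N <= p)%N ->
     K * (p%:R `^ (3 / 4 + eps')) <= c p /\ c p <= p%:R) ->
  exists P0 : nat, forall p : nat, (P0 <= p)%N -> (3 %| p)%N ->
    forall A B C : {set 'I_p},
      #|A| = (p %/ 3)%N -> #|B| = (p %/ 3)%N -> #|C| = (p %/ 3)%N ->
      [disjoint A & B] -> [disjoint A & C] -> [disjoint B & C] ->
      A :|: B :|: C = [set: 'I_p] ->
      let gamma := c p ^+ 2 / (6 * p%:R) in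
      gnp_prob (c p / p%:R)
        (fun E => (m_AC E A B C gamma)%:R <= (p%:R / 3) ^+ 2 / 2 :> R)
      <= (p%:R / 3) * expR (- (p%:R / 36)).
Proof.
move=> eps0 K0 hc.
pose M : R := 18000 ^+ 2 / K ^+ 4.
exists (maxn N (maxn 9 (Num.truncn M).+1)).
move=> p hp p3 A B C cA cB cC dAB dAC dBC hU.
cbv zeta.
set gamma := c p ^+ 2 / (6 * p%:R).
have pN : (N <= p)%N by apply: leq_trans hp; apply: leq_maxl.
have p9 : (9 <= p)%N by apply: leq_trans hp; rewrite leq_max leq_maxl orbT.
have pM : M < p%:R.
  apply: lt_le_trans (truncnS_gt M) _; rewrite ler_nat.
  by apply: leq_trans hp; rewrite leq_max leq_max leqnn !orbT.
set n := (p %/ 3)%N in cA cB cC.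
have pn : p = (3 * n)%N by rewrite mulnC divnK.
have n3 : (3 <= n)%N by move: p9; rewrite pn; lia.
have pR : p%:R = 3 * n%:R :> R by rewrite pn natrM.
have n0 : (0 : R) < n%:R by rewrite ltr0n; lia.
have p0 : (0 : R) < p%:R by rewrite pR mulr_gt0.
have [hK hcp] := hc p pN.
have p1 : (1 : R) <= p%:R by rewrite ler1n; apply: leq_trans p9.
have hK' : K * p%:R `^ (3/4) <= c p.
  apply: le_trans hK; apply: ler_wpM2l; first exact: ltW.
  by apply: ler_powR => //; rewrite lerDl ltW.
have pw0 : 0 <= p%:R `^ (3/4 : R) by apply: powR_ge0.
have cp0 : 0 <= c p by apply: le_trans hK'; apply: mulr_ge0 => //; apply: ltW.
pose q : R := c p / p%:R.
have q0 : 0 <= q by rewrite /q divr_ge0 // ltW.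
have q1 : q <= 1 by rewrite /q ler_pdivrMr // mul1r.
pose mu : R := n%:R * q.
pose thr : R := 4 / 5 * mu.
have hgam : gamma = mu * q / 2.
  rewrite /gamma /mu /q pR; field; exact: (lt0r_neq0 n0).
have hc4 : K ^+ 4 * p%:R ^+ 3 <= c p ^+ 4.
  rewrite -pow34 ?ler0n // -exprMn; apply: lerXn2r => //; rewrite nnegrE.
    by apply: mulr_ge0 => //; apply: ltW.
have K4 : 0 < K ^+ 4 by apply: exprn_gt0.
have hM : 18000 ^+ 2 < K ^+ 4 * p%:R.
  by move: pM; rewrite /M ltr_pdivrMr // mulrC.
have hc2 : 18000 * p%:R <= c p ^+ 2.
  apply: sq_le; first by rewrite exprn_ge0.
    by rewrite mulr_ge0 ?ler0n.
  rewrite -exprM /= exprMn.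
  apply: le_trans hc4; rewrite [_ ^+ 3]exprS mulrA [X in _ <= X]mulrC.
  rewrite [X in X <= _]mulrC; apply: ler_wpM2l; first by rewrite exprn_ge0 ?ler0n.
  exact: ltW.
have hmq : 6000 <= mu * q.
  have -> : mu * q = c p ^+ 2 / (3 * p%:R).
    by rewrite /mu /q pR; field; exact: (lt0r_neq0 n0).
  rewrite ler_pdivlMr; last by rewrite mulr_gt0.
  by have -> : (6000 * (3 * p%:R) : R) = 18000 * p%:R by ring.
have mu0 : 0 <= mu by rewrite /mu mulr_ge0 // ler0n.
have hmu : 6000 <= mu by apply: le_trans hmq _; rewrite -[X in _ <= X]mulr1; apply: ler_wpM2l.
have thr0 : 0 <= thr by rewrite /thr mulr_ge0 // divr_ge0.
have gam0 : 0 <= gamma by rewrite hgam divr_ge0 // mulr_ge0.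
have cCA : #|C| = #|A| by rewrite cC cA.
have hp3 : p%:R / 3 = n%:R :> R by rewrite pR; field.
have hp36 : p%:R / 36 = n%:R / 12 :> R by rewrite pR; field.
rewrite hp3 hp36 -cA.
have q01 : 0 <= q <= 1 by apply/andP.
have r1b := r1_bound q01 (erefl mu) (erefl thr) hmu.
have r2b := r2_bound q01 (erefl thr) hgam hmq mu0.
set r1 := (1 - q / 10) ^+ n * (10 / 9) ^+ (Num.truncn thr).+1 in r1b.
set r2 := expR (- (q / 4 * thr)) * (4 / 3) ^+ (Num.truncn gamma).+1 in r2b.
have r10 : 0 <= r1 by rewrite /r1 mulr_ge0 // exprn_ge0 ?divr_ge0 //; apply: nb1.
have r20 : 0 <= r2 by rewrite /r2 mulr_ge0 ?expR_ge0 // exprn_ge0 ?divr_ge0.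
apply: le_trans (@main_bound R p A B C dAB dAC dBC q thr gamma q0 q1 r1 r2 cCA thr0 r10 r20 _ _) _.
- move=> a aA; rewrite /r1 -cB; apply: low_bound => //; exact: (notBA dAB aA).
- by move=> a E1 c0 aA _ cC0 hd; exact: (bad_bound dAB dBC q0 q1 aA cC0 hd gam0).
rewrite cA.
apply: le_trans (lerD (fin_bound n _) (ler_wpM2l (ler0n _ _) (fin_bound n _))) _.
- by apply/andP.
- by apply/andP.
exact: last_bound.
Qed.
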